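(* In the spectral sequence described in the context, if $r\geq 2$ and $r\not\equiv 4\pmod 9$ and $r\not\equiv 8\pmod 9$, then $d_r=0$. Furthermore, for every $n\geq 0$, $$d_{4+9n}(W_+^{(4+9n)})\subseteq W_-^{(4+9n)},\quad d_{4+9n}(W_-^{(4+9n)})=0,\quad d_{8+9n}(W_+^{(8+9n)})=0,\quad d_{8+9n}(W_-^{(8+9n)})\subseteq W_+^{(8+9n)}.$$
   Context: $k=\mathbb{F}_3$. The spectral sequence is the $b_{10}$-localized $K(\xi_1)$-based Adams spectral sequence converging to $b_{10}^{-1}\operatorname{Ext}_P(\mathbb{F}_3,\mathbb{F}_3)$, trigraded by $(s,t,u)$ (filtration, internal homological degree, internal topological degree) with $d_r:E_r^{s,t,u}\to E_r^{s+r,t-r+1,u}$ and $E_2\cong E[h_{10}]\otimes k[b_{10}^{\pm1}][w_2,w_3,\dots]$, where $h_{10}$ has degree $(0,1,4)$, $b_{10}$ has $(0,2,12)$, $w_n$ has $(1,1,2(3^n+1))$. On $E_2$, $W_+=k[b_{10}^{\pm1}][w_2,w_3,\dots]$ and $W_-=h_{10}W_+$; equivalently $W_+$ (resp. $W_-$) is spanned by the trihomogeneous elements with $s+t$ even (resp. odd). For each $r$, $W_+^{(r)}$ (resp. $W_-^{(r)}$) denotes the span of trihomogeneous elements of $E_r$ with $s+t$ even (resp. odd). *)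

(* Defs.v *)
From HB Require Import structures.
From mathcomp Require Import all_boot all_order all_algebra.
Set Implicit Arguments. Unset Strict Implicit. Unset Printing Implicit Defensive.
Import Order.TTheory GRing.Theory Num.Theory.
Local Open Scope ring_scope.

Notation k := 'F_3.

Definition tdeg := (int * int * int)%type.
Definition tdeg_s (x : tdeg) : int := x.1.1.
Definition tdeg_t (x : tdeg) : int := x.1.2.
Definition tdeg_u (x : tdeg) : int := x.2.

Definition dshift (r : nat) (x : tdeg) : tdeg :=
  (tdeg_s x + r%:Z, tdeg_t x - r%:Z + 1, tdeg_u x).

(* s + t even: the tridegree belongs to W_+ ; otherwise to W_-. *)
Definition plus_deg (x : tdeg) : bool := (2 %| tdeg_s x + tdeg_t x)%Z.

(* The page E_r is the direct sum of
   its trihomogeneous parts [page r x]; the differential is recorded by its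
   components [diff r x y : E_r^x -> E_r^y], required to vanish unless
   y = dshift r x.  E_{r+1} is the homology of (E_r, d_r), recorded
   tridegreewise up to isomorphism (equivalently, by dimension):
   dim E_{r+1}^y = dim ker(d_r on E_r^y) - dim im(d_r into E_r^y). *)
Record trigradedSS := TrigradedSS {
  page : nat -> tdeg -> vectType k;
  diff : forall (r : nat) (x y : tdeg), 'Hom(page r x, page r y);
  diff_deg : forall r x y, y <> dshift r x -> diff r x y = 0;
  diff_sq : forall r x y z v, diff r y z (diff r x y v) = 0;
  diff_homology : forall (r : nat) (x y z : tdeg), (2 <= r)%N ->
    y = dshift r x -> z = dshift r y ->
    (\dim (fullv : {vspace page r.+1 y}) + \dim (limg (diff r x y))
      = \dim (lker (diff r y z)))%N
}.

(* Monomials h10^eps b10^kk w_{n_1} ... w_{n_s} of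
   E_2 = E[h10] (x) k[b10^{+-1}][w_2, w_3, ...]: the w-part is encoded as the
   nondecreasing list of its indices (a multiset of integers n >= 2). *)
Definition monomial := (bool * int * seq nat)%type.

Definition monomial_valid (m : monomial) : bool :=
  sorted leq m.2 && all (fun n => 2 <= n)%N m.2.

(* deg h10 = (0,1,4), deg b10 = (0,2,12), deg w_n = (1,1,2(3^n+1)). *)
Definition monomial_deg (m : monomial) : tdeg :=
  let eps : int := (m.1.1 : nat)%:Z in
  let kk := m.1.2 in
  let s : int := (size m.2)%:Z in
  (s, eps + 2 * kk + s,
   4 * eps + 12 * kk + \sum_(n <- m.2) (2 * (3 ^ n + 1))%N%:Z).

(* E_2 is isomorphic, as a trigraded k-vector space, to
   E[h10] (x) k[b10^{+-1}][w_2, w_3, ...]: in every tridegree x, E_2^x has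
   dimension the (finite) number of monomials of tridegree x. *)
Definition E2_is_standard (E : trigradedSS) : Prop :=
  forall x : tdeg, exists L : seq monomial,
    [/\ uniq L,
        (forall m, m \in L <-> (monomial_valid m /\ monomial_deg m = x)) &
        \dim (fullv : {vspace page E 2 x}) = size L].

(* Main.v *)
Require Import Defs.
From HB Require Import structures.
From mathcomp Require Import all_boot all_order all_algebra zify.
Import Order.TTheory GRing.Theory Num.Theory.
Local Open Scope ring_scope.

Lemma sum_mod (l : seq nat) : all (fun n => 2 <= n)%N l ->
  exists q : int, \sum_(n <- l) (2 * (3 ^ n + 1))%N%:Z = 2 * (size l)%:Z + 18 * q.
Proof.
elim: l => [|n l IH] /=; first by exists 0; rewrite big_nil; lia.
move=> /andP [hn /IH [q hq]]; rewrite big_cons hq.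
have e : (3 ^ n = 9 * 3 ^ (n - 2))%N by rewrite -(subnK hn) expnD mulnC subnK.
exists (q + (3 ^ (n - 2))%:Z); rewrite e. lia.
Qed.

Lemma hom0_src (U V : vectType k) (f : 'Hom(U, V)) :
  \dim (fullv : {vspace U}) = 0%N -> f = 0.
Proof.
move=> /eqP; rewrite dimv_eq0 => /eqP h; apply/lfunP => u.
have : u \in (fullv : {vspace U}) by apply: memvf.
by rewrite h memv0 => /eqP ->; rewrite !linear0.
Qed.

Lemma hom0_tgt (U V : vectType k) (f : 'Hom(U, V)) :
  \dim (fullv : {vspace V}) = 0%N -> f = 0.
Proof.
move=> /eqP; rewrite dimv_eq0 => /eqP h; apply/lfunP => u.
have : f u \in (fullv : {vspace V}) by apply: memvf.
by rewrite h memv0 => /eqP ->; rewrite lfunE.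
Qed.

Lemma dim_le2 (E : trigradedSS) r y : (2 <= r)%N ->
  (\dim (fullv : {vspace page E r y}) <= \dim (fullv : {vspace page E 2 y}))%N.
Proof.
elim: r => [|r IH] //; rewrite leq_eqVlt => /orP [/eqP <- //| hr].
have hr' : (2 <= r)%N by [].
apply: leq_trans (IH hr'); move: y IH => [[a b] c] IH.
have := @diff_homology E r (a - r%:Z, b + r%:Z - 1, c) (a, b, c) (dshift r (a, b, c)) hr'.
rewrite /dshift /tdeg_s /tdeg_t /tdeg_u /= => H.
have ey : (a, b, c) = (a - r%:Z + r%:Z, b + r%:Z - 1 - r%:Z + 1, c).
  by rewrite subrK; congr (pair (pair _ _) _); lia.
have := H ey erefl.
move=> h.
apply: (@leq_trans (\dim (lker (diff E r (a, b, c) (a + r%:Z, b - r%:Z + 1, c))))).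
  by rewrite -h leq_addr.
by apply: dimvS; apply: subvf.
Qed.

Lemma arith (m m' : monomial) r : monomial_valid m -> monomial_valid m' ->
  monomial_deg m' = dshift r (monomial_deg m) ->
  [/\ plus_deg (monomial_deg m) = ~~ m.1.1, plus_deg (monomial_deg m') = m.1.1
    & (r %% 9 = if m.1.1 then 8 else 4)%N].
Proof.
case: m => [[e kk] A]; case: m' => [[e' kk'] B].
rewrite /monomial_valid /= => /andP [_ /sum_mod [q hq]] /andP [_ /sum_mod [q' hq']].
rewrite /monomial_deg /dshift /plus_deg /tdeg_s /tdeg_t /tdeg_u /= hq hq'.
move=> [h1 h2 h3].
case: e h2 h3 => /=; case: e' => /= h2 h3; split; lia.
Qed.

Lemma nz_monomial (E : trigradedSS) (HE2 : E2_is_standard E) r x : (2 <= r)%N ->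
  \dim (fullv : {vspace page E r x}) <> 0%N ->
  exists m, monomial_valid m /\ monomial_deg m = x.
Proof.
move=> hr hn; case: (HE2 x) => L [_ hL hd].
have := @dim_le2 E r x hr; rewrite hd; case: L hL hd => [|m L] hL hd.
  by rewrite leqn0 => /eqP.
by move=> _; exists m; apply/hL; rewrite inE eqxx.
Qed.



Lemma nz_diff (E : trigradedSS) (HE2 : E2_is_standard E) r x y : (2 <= r)%N ->
  diff E r x y <> 0 ->
  exists b : bool, [/\ plus_deg x = ~~ b, plus_deg y = b &
                      (r %% 9 = if b then 8 else 4)%N].
Proof.
move=> hr hd.
have ey : y = dshift r x.
  case: (eqVneq y (dshift r x)) => [//|ne]; case: hd; apply: diff_deg; exact/eqP.
have [m [vm dm]] : exists m, monomial_valid m /\ monomial_deg m = x.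
  by apply: (@nz_monomial E HE2 r _ hr) => h; apply: hd; apply: hom0_src.
have [m' [vm' dm']] : exists m, monomial_valid m /\ monomial_deg m = y.
  by apply: (@nz_monomial E HE2 r _ hr) => h; apply: hd; apply: hom0_tgt.
have [a1 a2 a3] := @arith m m' r vm vm' ltac:(by rewrite dm' ey dm).
by exists m.1.1; rewrite -dm -dm' a1 a2 a3.
Qed.

Theorem proposition2p3 (E : trigradedSS) (HE2 : E2_is_standard E) :
  (forall r : nat, (2 <= r)%N -> (r %% 9)%N <> 4%N -> (r %% 9)%N <> 8%N ->
     forall x y : tdeg, diff E r x y = 0)
  /\
  (forall n : nat,
     let r := (4 + 9 * n)%N in
     let r' := (8 + 9 * n)%N in
     (* d_r(W_+^(r)) is contained in W_-^(r) *)
     (forall x y : tdeg, plus_deg x ->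
        (limg (diff E r x y) <= 0)%VS \/ ~~ plus_deg y)
     (* d_r(W_-^(r)) = 0 *)
     /\ (forall x y : tdeg, ~~ plus_deg x -> diff E r x y = 0)
     (* d_r'(W_+^(r')) = 0 *)
     /\ (forall x y : tdeg, plus_deg x -> diff E r' x y = 0)
     (* d_r'(W_-^(r')) is contained in W_+^(r') *)
     /\ (forall x y : tdeg, ~~ plus_deg x ->
        (limg (diff E r' x y) <= 0)%VS \/ plus_deg y)).
Proof.
split.
  move=> r hr h4 h8 x y; case: (eqVneq (diff E r x y) 0) => [//|/eqP hd].
  by have [[] [_ _ hm]] := @nz_diff E HE2 _ x y hr hd.
move=> n r r'.
have hr : (2 <= r)%N by rewrite /r; lia.
have hr' : (2 <= r')%N by rewrite /r'; lia.
have m4 : (r %% 9 = 4)%N by rewrite /r; lia.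
have m8 : (r' %% 9 = 8)%N by rewrite /r'; lia.
split; [|split; [|split]] => x y hx.
- case: (eqVneq (diff E r x y) 0) => [->|hd]; first by left; rewrite lim0g.
  have [[] [px py hm]] := @nz_diff E HE2 _ x y hr (elimN eqP hd).
    by rewrite m4 in hm.
  by right; rewrite py.
- case: (eqVneq (diff E r x y) 0) => [//|/eqP hd]; have [[] [px py hm]] := @nz_diff E HE2 _ x y hr hd.
    by rewrite m4 in hm.
  by rewrite px in hx.
- case: (eqVneq (diff E r' x y) 0) => [//|/eqP hd]; have [[] [px py hm]] := @nz_diff E HE2 _ x y hr' hd.
    by rewrite px in hx.
  by rewrite m8 in hm.
- case: (eqVneq (diff E r' x y) 0) => [->|hd]; first by left; rewrite lim0g.
  have [[] [px py hm]] := @nz_diff E HE2 _ x y hr' (elimN eqP hd).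
    by right; rewrite py.
  by rewrite m8 in hm.
Qed.
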